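(* Let $N\ge3$, let $v_1,\dots,v_N$ and $\beta_1,\dots,\beta_{N-1}$ be variables/constants, $f_n=v_n+v_{n+1}$ (indices mod $N$), and let $T(\lambda)=V_N(\lambda+\beta_{N-1})\cdots V_2(\lambda+\beta_1)V_1(\lambda)=\begin{pmatrix}A(\lambda)&B(\lambda)\\C(\lambda)&D(\lambda)\end{pmatrix}$ with $V_n(\lambda)=\begin{pmatrix}v_n&1\\ \lambda+v_n^2&v_n\end{pmatrix}$. Then there is a polynomial $\tilde A(\lambda)$ such that $A(\lambda)=B(\lambda)v_1+\tilde A(\lambda)\lambda$. Moreover $\tilde A(\lambda)=f_2$ for $N=3$, and for $N\ge4$ $$\tilde A(\lambda)=\prod_{n=2}^{N-2}\Bigl(1+(\lambda+\beta_n)\frac{\partial^2}{\partial f_n\partial f_{n+1}}\Bigr)(f_2\cdots f_{N-1}),$$ while for all $N\ge3$ $$B(\lambda)=\prod_{n=1}^{N-2}\Bigl(1+(\lambda+\beta_n)\frac{\partial^2}{\partial f_n\partial f_{n+1}}\Bigr)(f_1\cdots f_{N-1}).$$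
   Context: In the product formulas the monomial $f_m\cdots f_{N-1}$ is treated as a polynomial in independent variables $f_m,\dots,f_{N-1}$; the commuting differential operators are applied and then $f_n=v_n+v_{n+1}$ is substituted. *)

(* Defs.v *)
From HB Require Import structures.
From mathcomp Require Import all_boot all_order all_algebra.
From mathcomp Require Import mpoly.
Set Implicit Arguments. Unset Strict Implicit. Unset Printing Implicit Defensive.
Import Order.TTheory GRing.Theory Num.Theory.
Local Open Scope ring_scope.

Section Lax.
Variable R : comNzRingType.
(* v n = v_n (1-based, n = 1..N),  beta n = beta_n (n = 1..N-1). *)
Variables (v beta : nat -> R).

Definition Vmat (n : nat) (mu : {poly R}) : 'M[{poly R}]_2 :=
  \matrix_(i < 2, j < 2)
    (if (i == 0 :> nat) then (if (j == 0 :> nat) then (v n)%:P else 1)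
     else (if (j == 0 :> nat) then mu + (v n ^+ 2)%:P else (v n)%:P)).

Fixpoint Tprod (n : nat) : 'M[{poly R}]_2 :=
  match n with
  | 0 => 1%:M
  | 1 => Vmat 1 'X
  | k.+1 => Vmat k.+1 ('X + (beta k)%:P) *m Tprod k
  end.

Definition Tmat (N : nat) := Tprod N.
Definition Aent (N : nat) : {poly R} := Tmat N 0 0.
Definition Bent (N : nat) : {poly R} := Tmat N 0 1.

(* Independent formal variables f_0, ..., f_N (we use f_1 .. f_{N-1}),
   polynomials with coefficients in R[lambda]. *)
Definition fvar (N n : nat) : {mpoly {poly R}[N.+1]} := 'X_(inord n).

Definition fmono (N m : nat) : {mpoly {poly R}[N.+1]} :=
  \prod_(m <= k < N) fvar N k.

Definition Lop (N n : nat) (p : {mpoly {poly R}[N.+1]}) : {mpoly {poly R}[N.+1]} :=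
  p + ('X + (beta n)%:P) *: mderiv (inord n) (mderiv (inord n.+1) p).

(* prod_{n=a}^{b} Lop n, applied to p (the operators commute) *)
Definition Lprod (N a b : nat) (p : {mpoly {poly R}[N.+1]}) :=
  foldr (fun n q => @Lop N n q) p (iota a (b.+1 - a)).

Definition fval (N : nat) (i : 'I_N.+1) : {poly R} :=
  (v i + v (if (i : nat) == N then 1%N else (i : nat).+1))%:P.

Definition fsubst (N : nat) (p : {mpoly {poly R}[N.+1]}) : {poly R} :=
  p.@[fval (N:=N)].

End Lax.

(* Main.v *)
Require Import Defs.
From HB Require Import structures.
From mathcomp Require Import all_boot all_order all_algebra.
From mathcomp Require Import ring.
Import GRing.Theory.
Local Open Scope ring_scope.

From mathcomp Require Import mpoly.
From mathcomp Require Import zify.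
Fixpoint Kl {R : comNzRingType} (g m : nat -> {poly R}) (a k : nat) {struct k} : {poly R} :=
  match k with
  | 0 => 1
  | 1 => g a
  | (k'.+1 as k1).+1 => g a * Kl g m a.+1 k1 + m a * Kl g m a.+2 k'
  end.

Lemma KlSS (R : comNzRingType) (g m : nat -> {poly R}) a k :
  Kl g m a k.+2 = g a * Kl g m a.+1 k.+1 + m a * Kl g m a.+2 k.
Proof. by []. Qed.

Lemma Kl_right (R : comNzRingType) (g m : nat -> {poly R}) k :
  (forall a, Kl g m a k.+2 = g (a + k.+1)%N * Kl g m a k.+1 + m (a + k)%N * Kl g m a k) /\
  (forall a, Kl g m a k.+3 = g (a + k.+2)%N * Kl g m a k.+2 + m (a + k.+1)%N * Kl g m a k.+1).
Proof.
elim: k => [|k [IH1 IH2]].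
  split=> a /=; rewrite !addn1 ?addn2 ?addn0; ring.
split=> // a.
rewrite (KlSS _ g m a k.+2) (KlSS _ g m a k.+1) (KlSS _ g m a k) (IH2 a.+1) (IH1 a.+2).
rewrite !addSn !addnS.
ring.
Qed.
Definition gv {R : comNzRingType} (v : nat -> R) (k : nat) : {poly R} := (v k + v k.+1)%:P.
Definition mb {R : comNzRingType} (beta : nat -> R) (k : nat) : {poly R} := 'X + (beta k)%:P.
Definition cc {R : comNzRingType} (v beta : nat -> R) (k : nat) : {poly R} :=
  if k is k'.+1 then Kl (gv v) (mb beta) 2 k' else 0.

Lemma TprodSS (R : comNzRingType) (v beta : nat -> R) k :
  Tprod v beta k.+2 = Vmat v k.+2 ('X + (beta k.+1)%:P) *m Tprod v beta k.+1.
Proof. by []. Qed.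

Lemma mul2E (R : comNzRingType) (A B : 'M[{poly R}]_2) i j :
  (A *m B) i j = A i 0 * B 0 j + A i 1 * B 1 j.
Proof.
rewrite !mxE !big_ord_recl big_ord0 addr0.
have -> : (0 : 'I_2) = ord0 by apply/val_inj.
have -> : (1 : 'I_2) = lift ord0 ord0 by apply/val_inj.
by [].
Qed.

Lemma VmatE (R : comNzRingType) (v : nat -> R) n mu :
  [/\ Vmat v n mu 0 0 = (v n)%:P, Vmat v n mu 0 1 = 1,
      Vmat v n mu 1 0 = mu + (v n ^+ 2)%:P & Vmat v n mu 1 1 = (v n)%:P].
Proof. by rewrite !mxE. Qed.

Lemma ccS (R : comNzRingType) (v beta : nat -> R) k :
  cc v beta k.+2 = gv v k.+2 * cc v beta k.+1 + mb beta k.+1 * cc v beta k.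
Proof.
case: k => [|k]; first by rewrite /cc /=; ring.
have [E1 _] := Kl_right _ (gv v) (mb beta) k.
by rewrite /cc E1.
Qed.

Lemma Tinv (R : comNzRingType) (v beta : nat -> R) k :
  [/\ Tprod v beta k.+1 0 0 = Kl (gv v) (mb beta) 1 k * (v 1%N)%:P + cc v beta k * 'X,
      Tprod v beta k.+1 0 1 = Kl (gv v) (mb beta) 1 k,
      Tprod v beta k.+1 1 0 = (v k.+1)%:P * Tprod v beta k.+1 0 0 + (if k is k'.+1 then mb beta k * (Kl (gv v) (mb beta) 1 k' * (v 1%N)%:P + cc v beta k' * 'X) else 'X) &
      Tprod v beta k.+1 1 1 = (v k.+1)%:P * Tprod v beta k.+1 0 1 + (if k is k'.+1 then mb beta k * Kl (gv v) (mb beta) 1 k' else 0)].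
Proof.
elim: k => [|k IH].
  have [E00 E01 E10 E11] := VmatE _ v 1 'X.
  rewrite /= E00 E01 E10 E11 /cc /=. split; rewrite ?polyCM; ring.
rewrite TprodSS !mul2E.
have [E00 E01 E10 E11] := VmatE _ v k.+2 ('X + (beta k.+1)%:P).
rewrite E00 E01 E10 E11.
move: (Tprod v beta k.+1) IH => T [H00 H01 H10 H11].
rewrite H10 H11 H00 H01.
clear E00 E01 E10 E11; case: k {T H00 H01 H10 H11} => [|k].
  rewrite /cc /gv /= !polyCD !polyCM /mb. split; ring.
have [E1 _] := Kl_right _ (gv v) (mb beta) k.
rewrite ccS E1 !add1n /gv /mb !polyCD !polyCM.
split; ring.
Qed.
Lemma dfvar (R : comNzRingType) (N i j : nat) : (i <= N)%N -> (j <= N)%N ->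
  mderiv (inord j) (fvar R N i) = (i == j)%:R.
Proof.
move=> hi hj; rewrite /fvar mderivX mnm1E.
have -> : (inord i == inord j :> 'I_N.+1) = (i == j).
  apply/eqP/eqP => [/(congr1 val)|->//]. rewrite /= !inordK //.
case: eqP => [->|_]; last by rewrite scale0r.
have -> : (U_(@inord N j) - U_(@inord N j))%MM = 0%MM.
  by rewrite -{1}[U_(_)%MM]add0m addmK.
by rewrite mpolyX0 scale1r.
Qed.

Lemma dLop (R : comNzRingType) (beta : nat -> R) (N n : nat) i (p : {mpoly {poly R}[N.+1]}) :
  mderiv i (Lop beta n p) = Lop beta n (mderiv i p).
Proof.
rewrite /Lop mderivD mderivZ; congr (_ + _ *: _).
by rewrite (mderiv_comm i) (mderiv_comm i).
Qed.

Lemma dfoldr (R : comNzRingType) (beta : nat -> R) (N : nat) i s (p : {mpoly {poly R}[N.+1]}) :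
  mderiv i (foldr (fun n q => Lop beta n q) p s) = foldr (fun n q => Lop beta n q) (mderiv i p) s.
Proof. by elim: s => [|n s IH] //=; rewrite dLop IH. Qed.

Lemma dLprod (R : comNzRingType) (beta : nat -> R) (N a b : nat) i (p : {mpoly {poly R}[N.+1]}) :
  mderiv i (Lprod beta a b p) = Lprod beta a b (mderiv i p).
Proof. exact: dfoldr. Qed.

Lemma Lop0 (R : comNzRingType) (beta : nat -> R) (N n : nat) :
  Lop beta n (0 : {mpoly {poly R}[N.+1]}) = 0.
Proof. by rewrite /Lop !mderiv0 scaler0 addr0. Qed.

Lemma Lprod0 (R : comNzRingType) (beta : nat -> R) (N a b : nat) :
  Lprod beta a b (0 : {mpoly {poly R}[N.+1]}) = 0.
Proof. rewrite /Lprod; elim: (iota _ _) => [|n s IH] //=; by rewrite IH Lop0. Qed.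

Lemma LprodS (R : comNzRingType) (beta : nat -> R) (N a b : nat) (p : {mpoly {poly R}[N.+1]}) :
  (a <= b)%N -> Lprod beta a b p = Lop beta a (Lprod beta a.+1 b p).
Proof.
move=> hab; rewrite /Lprod.
have -> : (b.+1 - a = (b.+1 - a.+1).+1)%N by lia.
by [].
Qed.

Lemma Lprod_id (R : comNzRingType) (beta : nat -> R) (N a b : nat) (p : {mpoly {poly R}[N.+1]}) :
  (b < a)%N -> Lprod beta a b p = p.
Proof.
move=> hab; rewrite /Lprod.
have -> : (b.+1 - a = 0)%N by lia.
by [].
Qed.

Lemma fmonoS (R : comNzRingType) (N a : nat) : (a < N)%N ->
  fmono R N a = fvar R N a * fmono R N a.+1.
Proof. by move=> h; rewrite /fmono big_ltn. Qed.

Lemma fmonoN (R : comNzRingType) (N a : nat) : (N <= a)%N -> fmono R N a = 1.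
Proof. by move=> h; rewrite /fmono big_geq. Qed.

Lemma dfmono (R : comNzRingType) (N a j : nat) : (j < a)%N -> (j <= N)%N ->
  mderiv (inord j) (fmono R N a) = 0.
Proof.
move=> hja hjN; move: {2}(N - a)%N (erefl (N - a)%N) => d.
elim: d a hja => [|d IH] a hja hd.
  have hN : (N <= a)%N by lia.
  by rewrite fmonoN // -mpolyC1 mderivC.
have ha : (a < N)%N by lia.
rewrite fmonoS //.
have haN : (a <= N)%N by apply: ltnW.
rewrite mderivM dfvar //.
have -> : (a == j) = false by apply/negbTE; rewrite neq_ltn hja orbT.
have hd' : (N - a.+1)%N = d by lia.
have hja' : (j < a.+1)%N by apply: ltnW.
by rewrite mul0r add0r (IH a.+1 hja' hd') mulr0.
Qed.

Lemma LopM (R : comNzRingType) (beta : nat -> R) (N n a : nat) (q : {mpoly {poly R}[N.+1]}) :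
  (a <= N)%N -> (n.+1 <= N)%N -> a != n -> a != n.+1 ->
  Lop beta n (fvar R N a * q) = fvar R N a * Lop beta n q.
Proof.
move=> haN hn h1 h2; rewrite /Lop.
rewrite mderivM (@dfvar R N _ _ haN hn).
rewrite (negbTE h2) mul0r add0r mderivM (@dfvar R N _ _ haN (ltnW hn)).
by rewrite (negbTE h1) mul0r add0r mulrDr scalerAr.
Qed.

Lemma LprodM (R : comNzRingType) (beta : nat -> R) (N c b a : nat) (q : {mpoly {poly R}[N.+1]}) :
  (a < c)%N -> (b < N)%N ->
  Lprod beta c b (fvar R N a * q) = fvar R N a * Lprod beta c b q.
Proof.
move=> hac hbN; rewrite /Lprod.
have : all (fun n => (a < n)%N && (n <= b)%N) (iota c (b.+1 - c)).
  apply/allP => n; rewrite mem_iota => /andP [h1 h2]; apply/andP; split; lia.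
elim: (iota _ _) => [|n s IH] //= /andP [/andP [h1 h2] hs].
rewrite IH // LopM //; try lia; by apply/eqP; lia.
Qed.

Definition PP {R : comNzRingType} (beta : nat -> R) (N a : nat) :=
  Lprod beta a (N - 2) (fmono R N a).

Lemma HQ (R : comNzRingType) (beta : nat -> R) (N c : nat) : (c < N)%N ->
  Lprod beta c (N - 2) (fmono R N c.+1) = PP beta N c.+1.
Proof.
move=> hc; rewrite /PP.
case: (leqP c (N - 2)) => h.
  rewrite LprodS // {1}/Lop.
  rewrite [mderiv (inord c) _]mderiv_comm dLprod dfmono //; last by apply: ltnW.
  by rewrite Lprod0 mderiv0 scaler0 addr0.
by rewrite !Lprod_id //; apply: ltnW.
Qed.

Lemma Prec (R : comNzRingType) (beta : nat -> R) (N a : nat) : (2 <= N)%N -> (a <= N - 2)%N ->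
  PP beta N a = fvar R N a * PP beta N a.+1 + ('X + (beta a)%:P) *: PP beta N a.+2.
Proof.
move=> hN ha.
have haN : (a < N)%N by lia.
rewrite {1}/PP LprodS // (@fmonoS R _ _ haN) LprodM //; last by lia.
rewrite -/(PP beta N a.+1).
set Q := PP beta N a.+1.
have dQa : mderiv (inord a) Q = 0.
  rewrite /Q /PP dLprod dfmono //; last lia.
  by rewrite /Lprod; elim: (iota _ _) => //= n s ->; rewrite /Lop !mderiv0 scaler0 addr0.
have ha1 : (a.+1 < N)%N by lia.
have dQa1 : mderiv (inord a.+1) Q = PP beta N a.+2.
  rewrite /Q /PP dLprod (@fmonoS R _ _ ha1) mderivM dfvar //; try lia.
  by rewrite eqxx mul1r dfmono // mulr0 addr0 HQ.
rewrite /Lop.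
rewrite mderivM dfvar //; try lia.
rewrite (_ : (a == a.+1) = false); last by rewrite eqn_leq ltnn andbF.
rewrite mul0r add0r mderivM dfvar //; try lia.
rewrite eqxx mul1r.
have -> : mderiv (inord a) (mderiv (inord a.+1) Q) = 0 by rewrite mderiv_comm dQa mderiv0.
by rewrite mulr0 addr0 dQa1.
Qed.

Lemma fsubst_fvar (R : comNzRingType) (v : nat -> R) (N a : nat) : (a < N)%N ->
  fsubst v (fvar R N a) = gv v a.
Proof.
move=> ha; rewrite /fsubst /fvar mevalXU /fval /gv inordK; last by apply: ltnW.
by rewrite (_ : (a == N) = false) //; apply/negbTE; rewrite neq_ltn ha.
Qed.

Lemma PPeval (R : comNzRingType) (v beta : nat -> R) (N : nat) : (2 <= N)%N -> forall j,
  ((j <= N)%N -> fsubst v (PP beta N (N - j)) = Kl (gv v) (mb beta) (N - j) j) /\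
  ((j.+1 <= N)%N -> fsubst v (PP beta N (N - j.+1)) = Kl (gv v) (mb beta) (N - j.+1) j.+1).
Proof.
move=> hN; elim=> [|j [IH1 IH2]].
  split=> _.
    rewrite subn0 /PP Lprod_id; last by lia.
    by rewrite fmonoN // /fsubst meval1.
  have h1 : (N - 1 < N)%N by lia.
  rewrite /PP Lprod_id; last by lia.
  rewrite (@fmonoS R _ _ h1) fmonoN; last by lia.
  by rewrite mulr1 fsubst_fvar.
split=> // hj.
set a := (N - j.+2)%N.
have ha : (a <= N - 2)%N by lia.
have e1 : (N - j.+1)%N = a.+1 by lia.
have e2 : (N - j)%N = a.+2 by lia.
rewrite e1 in IH2; rewrite e2 in IH1.
rewrite Prec // /fsubst mevalD mevalM mevalZ.
rewrite -!/(fsubst _ _) IH1 ?IH2; try lia.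
rewrite fsubst_fvar; last by lia.
by rewrite KlSS.
Qed.

Theorem mainTheorem4 (R : comNzRingType) (N : nat) (v beta : nat -> R) :
  (3 <= N)%N ->
  (exists At : {poly R}, Aent v beta N = Bent v beta N * (v 1%N)%:P + At * 'X)
  /\ (N = 3%N ->
      Aent v beta N = Bent v beta N * (v 1%N)%:P + (v 2%N + v 3%N)%:P * 'X)
  /\ ((4 <= N)%N ->
      Aent v beta N = Bent v beta N * (v 1%N)%:P
        + fsubst v (Lprod beta 2 (N - 2) (fmono R N 2)) * 'X)
  /\ Bent v beta N = fsubst v (Lprod beta 1 (N - 2) (fmono R N 1)).
Proof.
move=> hN.
have [k eN] : exists k, N = k.+2.+1 by exists (N - 3)%N; lia.
have [T00 T01 _ _] := Tinv _ v beta k.+2.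
have hB : Bent v beta N = Kl (gv v) (mb beta) 1 k.+2 by rewrite /Bent /Tmat eN T01.
have hA : Aent v beta N = Bent v beta N * (v 1%N)%:P + Kl (gv v) (mb beta) 2 k.+1 * 'X.
  by rewrite hB /Aent /Tmat eN T00.
have hN2 : (2 <= N)%N by lia.
have [P1 _] := PPeval _ v beta N hN2 (N - 1).
have [P2 _] := PPeval _ v beta N hN2 (N - 2).
rewrite (_ : (N - (N - 1) = 1)%N) in P1; last by lia.
rewrite (_ : (N - (N - 2) = 2)%N) in P2; last by lia.
have E1 : fsubst v (Lprod beta 1 (N - 2) (fmono R N 1)) = Kl (gv v) (mb beta) 1 k.+2.
  rewrite -/(PP beta N 1) P1; last by lia.
  by rewrite eN.
have E2 : fsubst v (Lprod beta 2 (N - 2) (fmono R N 2)) = Kl (gv v) (mb beta) 2 k.+1.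
  rewrite -/(PP beta N 2) P2; last by lia.
  by rewrite eN.
split; first by exists (Kl (gv v) (mb beta) 2 k.+1).
split.
  move=> e3; rewrite hA; congr (_ + _ * _).
  have -> : k = 0%N by lia.
  by [].
split; first by move=> _; rewrite E2.
by rewrite E1.
Qed.
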